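(* Let $\mathcal{C}$ be a unimodular simplicial complex on ground set $[n]$. Then for every face $S$ of $\mathcal{C}$, the link $\operatorname{link}_S(\mathcal{C})$ is unimodular.
   Context: A simplicial complex on $[n]$ is a family of subsets of $[n]$ closed under subsets; facets are inclusion-maximal faces. For a face $S$, $\operatorname{link}_S(\mathcal{C})=\{F\setminus S: F\in\mathcal{C}, S\subseteq F\}$, a complex on ground set $[n]\setminus S$. $\mathcal{A}_{\mathcal{C}}$ is the $0/1$ matrix with columns indexed by $\mathbf{i}\in\{1,2\}^n$ and rows indexed by pairs $(F,\mathbf{e})$, $F$ a facet, $\mathbf{e}\in\{1,2\}^F$; entry $1$ iff $\mathbf{e}=\mathbf{i}|_F$. An integer matrix is unimodular if every circuit (nonzero integer kernel vector with coprime entries and inclusion-minimal support) has entries in $\{0,\pm1\}$; $\mathcal{C}$ is unimodular if $\mathcal{A}_{\mathcal{C}}$ is. *)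

(* Defs.v *)
From mathcomp Require Import all_boot all_order all_algebra.
Set Implicit Arguments. Unset Strict Implicit. Unset Printing Implicit Defensive.
Import GRing.Theory Num.Theory.
Local Open Scope ring_scope.

Definition simplicial_complex (V : finType) (C : {set {set V}}) : Prop :=
  forall F G : {set V}, F \in C -> G \subset F -> G \in C.

Definition facet (V : finType) (C : {set {set V}}) (F : {set V}) : bool :=
  (F \in C) && [forall G in C, (F \subset G) ==> (G == F)].

Definition link (V : finType) (C : {set {set V}}) (S : {set V})
  : {set {set {x : V | x \notin S}}} :=
  [set [set x : {x : V | x \notin S} | val x \in F] | F : {set V} in C & S \subset F].

(* Rows of A_C: pairs (F, e) with F a facet and e ∈ {1,2}^F; e is stored as
   a function V -> bool that is [false] outside F (bool encodes {1,2}). *)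
Definition Arow (V : finType) (C : {set {set V}}) :=
  {p : {set V} * {ffun V -> bool} |
     facet C p.1 && [forall v, (v \notin p.1) ==> ~~ p.2 v]}.

(* Columns: i ∈ {1,2}^V, encoded as {ffun V -> bool}.
   Entry is 1 iff e = i|_F. *)
Definition A_mat (V : finType) (C : {set {set V}})
  (r : Arow C) (i : {ffun V -> bool}) : int :=
  if [forall v in (val r).1, i v == (val r).2 v] then 1 else 0.

Definition in_kernel (R K : finType) (M : R -> K -> int) (x : K -> int) : Prop :=
  forall r, \sum_(k : K) M r k * x k = 0.

Definition supp (K : finType) (x : K -> int) : {set K} := [set k | x k != 0].

Definition circuit (R K : finType) (M : R -> K -> int) (x : K -> int) : Prop :=
  [/\ in_kernel M x,
      supp x != set0,
      (\big[gcdn/0%N]_(k : K) `|x k|%N = 1%N) &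
      forall y : K -> int, in_kernel M y -> supp y != set0 ->
        supp y \subset supp x -> supp y = supp x].

Definition unimodular_mx (R K : finType) (M : R -> K -> int) : Prop :=
  forall x : K -> int, circuit M x -> forall k, x k \in [:: 0; 1; -1].

Definition unimodular_complex (V : finType) (C : {set {set V}}) : Prop :=
  unimodular_mx (@A_mat V C).

(* Main.v *)
Require Import Defs.
From mathcomp Require Import all_boot all_order all_algebra.
From mathcomp Require Import zify.
From Stdlib Require Import Classical.
Set Implicit Arguments. Unset Strict Implicit. Unset Printing Implicit Defensive.
Import GRing.Theory Num.Theory.
Local Open Scope ring_scope.

Lemma big_gcd_dvd (K : finType) (a : K -> nat) k :
  (\big[gcdn/0%N]_k0 a k0 %| a k)%N.
Proof. by rewrite (bigD1 k) //= dvdn_gcdl. Qed.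

Lemma dvd_big_gcd (K : finType) m (a : K -> nat) :
  (forall k, m %| a k)%N -> (m %| \big[gcdn/0%N]_k a k)%N.
Proof.
move=> H; apply: (big_ind (fun g => m %| g)%N) => //.
by move=> u v hu hv; rewrite dvdn_gcd hu hv.
Qed.

Lemma normalize (R K : finType) (M : R -> K -> int) (y : K -> int) :
  in_kernel M y -> supp y != set0 ->
  (forall y' : K -> int, in_kernel M y' -> supp y' != set0 ->
        supp y' \subset supp y -> supp y' = supp y) ->
  exists c, circuit M c /\ supp c = supp y.
Proof.
move=> Hk Hn Hmin.
have [k0 hk0] := set0Pn _ Hn; rewrite inE in hk0.
set g := \big[gcdn/0%N]_k `|y k|%N.
have gpos : (0 < g)%N.
  rewrite lt0n; apply/eqP => g0; have := big_gcd_dvd (fun k => `|y k|%N) k0.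
  by rewrite -/g g0 dvd0n absz_eq0 (negPf hk0).
have gz : g%:Z != 0 by rewrite eqz_nat -lt0n.
have Hy k : y k = (y k %/ g%:Z)%Z * g%:Z.
  by rewrite divzK // dvdzE /= big_gcd_dvd.
set y' := fun k => (y k %/ g%:Z)%Z.
have Hsupp : supp y' = supp y.
  apply/setP => k; rewrite !inE [y k]Hy mulf_eq0 negb_or gz andbT //.
exists y'; split => //; split.
- move=> r; have := Hk r.
  under eq_bigr => k _ do rewrite [y k]Hy mulrA.
  by rewrite -mulr_suml => /eqP; rewrite mulf_eq0 (negPf gz) orbF => /eqP.
- by rewrite Hsupp.
- set h := \big[gcdn/0%N]_k `|y' k|%N.
  have Ha k : `|y k|%N = (`|y' k| * g)%N by rewrite {1}[y k]Hy abszM.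
  have hg : (h * g %| g)%N.
    apply: dvd_big_gcd => k; rewrite Ha dvdn_mul // /h.
    exact: (big_gcd_dvd (fun k => `|y' k|%N)).
  have h0 : h != 0%N.
    apply/eqP => h0; have := big_gcd_dvd (fun k => `|y' k|%N) k0.
    rewrite -/h h0 dvd0n absz_eq0 => /eqP yk0.
    move: hk0; rewrite [y k0]Hy; change ((y k0 %/ g%:Z)%Z) with (y' k0).
    by rewrite yk0 mul0r eqxx.
  have := dvdn_leq gpos hg. rewrite -{2}[g]mul1n leq_pmul2r //.
  by move: h0 {hg}; case: h => [|[|]].
- move=> y'' H1 H2 H3; rewrite Hsupp; apply: Hmin => //; by rewrite -Hsupp.
Qed.

Lemma exists_circuit (R K : finType) (M : R -> K -> int) m (y : K -> int) :
  (#|supp y| <= m)%N -> in_kernel M y -> supp y != set0 ->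
  exists c, circuit M c /\ supp c \subset supp y.
Proof.
elim: m y => [|m IH] y hm Hk Hn.
  by move: hm; rewrite leqn0 cards_eq0 (negPf Hn).
case: (classic (exists y', [/\ in_kernel M y', supp y' != set0,
          supp y' \subset supp y & supp y' <> supp y])).
  case=> y' [H1 H2 H3 H4].
  have hp : supp y' \proper supp y by rewrite properEneq H3 andbT; apply/eqP.
  have := proper_card hp => hc.
  have hm' : (#|supp y'| <= m)%N by rewrite -ltnS (leq_trans hc hm).
  have [c [Hc Hs]] := IH y' hm' H1 H2.
  by exists c; split => //; exact: subset_trans Hs H3.
move=> Hno.
have Hm : forall y' : K -> int, in_kernel M y' -> supp y' != set0 ->
        supp y' \subset supp y -> supp y' = supp y.
  move=> y' H1 H2 H3; apply: NNPP => H4; apply: Hno; by exists y'.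
have [c [Hc Hs]] := normalize Hk Hn Hm.
by exists c; split => //; rewrite Hs.
Qed.

Lemma circuit_prop (R K : finType) (M : R -> K -> int) (x y : K -> int) :
  circuit M x -> in_kernel M y -> supp y \subset supp x ->
  forall k l, x k * y l = y k * x l.
Proof.
case=> Hk Hn Hg Hmin Hker Hsub k l.
have Hz l' : x l' = 0 -> y l' = 0.
  move=> xl; apply/eqP; apply: contraT => yl.
  have := subsetP Hsub l'; rewrite !inE yl xl eqxx => /(_ isT) //.
case: (eqVneq (x k) 0) => xk0.
  by rewrite xk0 (Hz _ xk0) !mul0r.
set w := fun l => x k * y l - y k * x l.
have wker : in_kernel M w.
  move=> r; rewrite /w.
  under eq_bigr => l' _ do rewrite mulrBr [M r l' * (x k * _)]mulrCA [M r l' * (y k * _)]mulrCA.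
  by rewrite sumrB -!mulr_sumr Hker Hk !mulr0 subrr.
have wsub : supp w \subset supp x.
  apply/subsetP => l'; rewrite !inE; apply: contraNN => /eqP xl.
  by rewrite /w xl (Hz _ xl) !mulr0 subrr.
case: (eqVneq (supp w) set0) => w0.
  have : l \notin supp w by rewrite w0 inE.
  by rewrite inE negbK /w subr_eq0 => /eqP.
have := Hmin w wker w0 wsub => /setP /(_ k).
by rewrite !inE xk0 /w mulrC subrr eqxx.
Qed.

Definition proj (V : finType) (S : {set V}) (F : {set V}) : {set {x : V | x \notin S}} :=
  [set w : {x : V | x \notin S} | val w \in F].
Definition liftS (V : finType) (S : {set V}) (G : {set {x : V | x \notin S}}) : {set V} :=
  S :|: [set val w | w in G].
Definition res (V : finType) (S : {set V}) (i : {ffun V -> bool}) :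
  {ffun {x : V | x \notin S} -> bool} := [ffun w => i (val w)].
Definition glue (V : finType) (S : {set V}) (j : {ffun {x : V | x \notin S} -> bool})
  (b : {ffun V -> bool}) : {ffun V -> bool} :=
  [ffun v => match (insub v : option {x : V | x \notin S}) with Some w => j w | None => b v end].

Arguments res {V S} i.
Arguments proj {V S} F.

Lemma glue_in (V : finType) (S : {set V}) j b v : v \in S -> @glue V S j b v = b v.
Proof. by move=> h; rewrite ffunE insubN // negbK. Qed.

Lemma glue_val (V : finType) (S : {set V}) j b (w : {x : V | x \notin S}) :
  @glue V S j b (val w) = j w.
Proof. by rewrite ffunE valK. Qed.

Lemma res_glue (V : finType) (S : {set V}) j b : res (@glue V S j b) = j.
Proof. by apply/ffunP => w; rewrite ffunE glue_val. Qed.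

Lemma glue_res (V : finType) (S : {set V}) (i b : {ffun V -> bool}) :
  (forall v, v \in S -> i v = b v) -> @glue V S (res i) b = i.
Proof.
move=> H; apply/ffunP => v; case: (boolP (v \in S)) => hv.
  by rewrite glue_in // H.
by rewrite ffunE insubT ffunE.
Qed.

Lemma proj_liftS (V : finType) (S : {set V}) G : proj (@liftS V S G) = G.
Proof.
apply/setP => w; rewrite !inE (negPf (valP w)) /=.
by rewrite (mem_imset _ _ val_inj).
Qed.

Lemma liftS_proj (V : finType) (S : {set V}) (F : {set V}) : S \subset F -> @liftS V S (proj F) = F.
Proof.
move=> hSF; apply/setP => v; rewrite !inE; case: (boolP (v \in S)) => hv /=.
  by rewrite (subsetP hSF).
have -> : v = val (exist _ v hv : {x : V | x \notin S}) by [].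
by rewrite (mem_imset _ _ val_inj) inE.
Qed.

Lemma proj_mono (V : finType) (S : {set V}) (F1 F2 : {set V}) :
  F1 \subset F2 -> @proj V S F1 \subset proj F2.
Proof. by move=> h; apply/subsetP => w; rewrite !inE => /(subsetP h). Qed.

Lemma liftS_mono (V : finType) (S : {set V}) (G1 G2 : {set {x : V | x \notin S}}) :
  G1 \subset G2 -> @liftS V S G1 \subset liftS G2.
Proof. by move=> h; rewrite setUS // imsetS. Qed.

Lemma mem_link (V : finType) (C : {set {set V}}) (S : {set V}) (G : {set {x : V | x \notin S}}) :
  reflect (exists2 F, (F \in C) && (S \subset F) & G = proj F) (G \in link C S).
Proof.
apply: (iffP imsetP) => [[F hF ->]|[F hF ->]]; exists F; rewrite ?inE //.
by move: hF; rewrite inE.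
Qed.

Lemma facet_liftS (V : finType) (C : {set {set V}}) (S : {set V}) (G : {set {x : V | x \notin S}}) :
  facet (link C S) G -> facet C (liftS G).
Proof.
case/andP => /mem_link [F0 /andP [hF0 hS0] ->] /forallP Hm.
rewrite liftS_proj // /facet hF0 /=; apply/forallP => H; apply/implyP => hH; apply/implyP => hFH.
have hSH : S \subset H by exact: subset_trans hS0 hFH.
have hl : proj H \in link C S by apply/mem_link; exists H; rewrite ?hH.
have := Hm (proj H); rewrite hl (proj_mono _ hFH) /= => /eqP e.
by rewrite -(liftS_proj hSH) e liftS_proj.
Qed.

Lemma facet_proj (V : finType) (C : {set {set V}}) (S : {set V}) (F : {set V}) :
  facet C F -> S \subset F -> facet (link C S) (@proj V S F).
Proof.
case/andP => hF /forallP Hm hSF.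
have hl : proj F \in link C S by apply/mem_link; exists F; rewrite ?hF.
rewrite /facet hl /=; apply/forallP => H; apply/implyP => /mem_link [F1 /andP [hF1 hS1] ->].
apply/implyP => hsub.
have := Hm F1; rewrite hF1 /=.
have -> : F \subset F1 by rewrite -(liftS_proj hSF) -(liftS_proj hS1) liftS_mono.
by move=> /eqP ->.
Qed.

Lemma sum_ind (I : finType) (P : pred I) (f : I -> int) :
  \sum_i (if P i then 1 else 0) * f i = \sum_(i | P i) f i.
Proof. by rewrite [RHS]big_mkcond; apply: eq_bigr => i _; case: ifP; rewrite ?mul1r ?mul0r. Qed.

Lemma sum_reindex (V : finType) (S : {set V}) (F : {set V}) (e b : {ffun V -> bool})
   (g : {ffun V -> bool} -> int) :
  S \subset F -> (forall v, v \in S -> e v = b v) ->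
  \sum_(i : {ffun V -> bool} | [forall v in F, i v == e v]) g i =
  \sum_(j : {ffun {x : V | x \notin S} -> bool} | [forall w in @proj V S F, j w == res e w]) g (glue j b).
Proof.
move=> hSF heb.
rewrite (reindex_onto (fun j => @glue V S j b) res).
  apply: eq_bigl => j; rewrite res_glue eqxx andbT.
  apply/idP/idP.
    move/forallP=> H; apply/forallP => w; apply/implyP; rewrite inE => hw.
    by have := H (val w); rewrite hw /= glue_val ffunE.
  move/forallP => H; apply/forallP => v; apply/implyP => hv.
  case: (boolP (v \in S)) => hs.
    by rewrite glue_in // heb.
  have := H (exist _ v hs); rewrite inE /= hv /= ffunE /=.
  by rewrite ffunE insubT.
move=> i /forallP H; apply: glue_res => v hv.
by have := H v; rewrite (subsetP hSF _ hv) /= => /eqP ->; rewrite heb.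
Qed.

Lemma slice_ker (V : finType) (C : {set {set V}}) (S : {set V})
  (c : {ffun V -> bool} -> int) (b : {ffun V -> bool}) :
  in_kernel (@A_mat V C) c ->
  in_kernel (@A_mat _ (link C S)) (fun j => c (glue j b)).
Proof.
move=> Hc [[G e] Hr]; have /andP [hG he] := Hr.
set F := liftS G.
set e' : {ffun V -> bool} := [ffun v => (v \in F) && glue e b v].
have hr : facet C (F, e').1 && [forall v, (v \notin (F,e').1) ==> ~~ (F,e').2 v].
  rewrite /= facet_liftS //=; apply/forallP => v; apply/implyP => hv.
  by rewrite ffunE (negPf hv).
have := Hc (exist _ (F, e') hr).
rewrite /A_mat /= !sum_ind.
have hSF : S \subset F by rewrite subsetUl.
have heb v : v \in S -> e' v = b v.
  by move=> hv; rewrite ffunE (subsetP hSF v hv) glue_in.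
rewrite (sum_reindex c hSF heb) proj_liftS.
have -> : res e' = e; last by [].
apply/ffunP => w; rewrite ffunE /e' ffunE.
have := proj_liftS G => /setP /(_ w); rewrite inE => ->.
rewrite glue_val.
case: (boolP (w \in G)) => hw //=.
by have := forallP he w; rewrite /= hw /= => /negPf ->.
Qed.

Definition sgnS (V : finType) (S : {set V}) (i : {ffun V -> bool}) : int :=
  \prod_(v in S) (if i v then -1 else 1).

Lemma lift_ker (V : finType) (C : {set {set V}}) (S : {set V})
  (x : {ffun {x : V | x \notin S} -> bool} -> int) :
  in_kernel (@A_mat _ (link C S)) x ->
  in_kernel (@A_mat V C) (fun i => x (res i) * sgnS S i).
Proof.
move=> Hx [[F e] Hr]; have /andP [hF he] := Hr; rewrite /A_mat /= sum_ind.
case: (boolP (S \subset F)) => hSF.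
  rewrite (eq_bigr (fun i => x (res i) * sgnS S e)); last first.
    move=> i /forallP H; congr (_ * _); apply: eq_bigr => v hv.
    by have := H v; rewrite (subsetP hSF _ hv) /= => /eqP ->.
  rewrite -mulr_suml (sum_reindex (b:=e) (fun i => x (res i)) hSF) //.
  set pr := (@proj V S F, @res V S e).
  have hr : facet (link C S) pr.1 &&
       [forall w, (w \notin pr.1) ==> ~~ pr.2 w].
    rewrite /= facet_proj //=; apply/forallP => w; apply/implyP.
    rewrite inE ffunE => hw.
    by have := forallP he (val w); rewrite hw.
  have := Hx (exist _ pr hr); rewrite /A_mat /= sum_ind.
  under eq_bigr do rewrite res_glue.
  by move=> ->; rewrite mul0r.
case/subsetPn: hSF => s hs hsF.
set flip := fun i : {ffun V -> bool} => [ffun v => if v == s then ~~ i v else i v].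
have flipK : involutive flip.
  move=> i; apply/ffunP => v; rewrite !ffunE; case: eqP => // _; by rewrite negbK.
set t := \sum_(i | _) _.
have Hf : t = - t.
  rewrite {1}/t (reindex_inj (inv_inj flipK)) /t -sumrN; apply: eq_big => i.
    apply: eq_forallb => v; case: (boolP (v \in F)) => hv //=.
    rewrite ffunE; have : v != s by apply: contraNneq hsF => <-.
    by move=> /negPf ->.
  move=> _.
  have -> : @res V S (flip i) = res i.
    apply/ffunP => w; rewrite !ffunE.
    have : val w != s by apply/eqP => E; move: (valP w); rewrite E hs.
    by move=> /negPf ->.
  rewrite -mulrN; congr (_ * _).
  rewrite /sgnS (bigD1 s hs) [in RHS](bigD1 s hs) /= ffunE eqxx.
  rewrite (eq_bigr (fun v => if i v then -1 else 1)); last first.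
    by move=> v /andP [_ hv]; rewrite ffunE (negPf hv).
  by case: (i s); rewrite /= ?mulN1r ?mul1r ?opprK.
lia.
Qed.

Lemma main_gen (V : finType) (C : {set {set V}}) (S : {set V}) :
  unimodular_complex C -> unimodular_complex (link C S).
Proof.
move=> Huni x Hx k.
have [Hxk Hxn Hxg Hxmin] := Hx.
have [j0 hj0] := set0Pn _ Hxn; rewrite inE in hj0.
pose x' := fun i => x (res i) * sgnS S i.
have Hx'k : in_kernel (@A_mat V C) x' by exact: lift_ker.
have sgn0 i : sgnS S i != 0.
  by apply/prodf_neq0 => v _; case: (i v).
pose b0 : {ffun V -> bool} := [ffun => false].
have Hx'n : supp x' != set0.
  apply/set0Pn; exists (glue j0 b0); rewrite inE /x' res_glue mulf_neq0 //.
have [c [Hc Hcs]] := exists_circuit (leqnn _) Hx'k Hx'n.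
have Hcu := Huni c Hc.
have [_ Hcn _ _] := Hc.
have [i0 hi0] := set0Pn _ Hcn; rewrite inE in hi0.
pose cs := fun j : {ffun {x : V | x \notin S} -> bool} => c (glue j i0).
have Hcsk : in_kernel (@A_mat _ (link C S)) cs by by case: Hc => h _ _ _; exact: slice_ker.
have Hcss : supp cs \subset supp x.
  apply/subsetP => j; rewrite !inE => hj.
  have := subsetP Hcs (glue j i0); rewrite !inE /x' res_glue => /(_ hj).
  by rewrite mulf_eq0 negb_or => /andP [].
pose l := @res V S i0.
have hl : cs l = c i0 by rewrite /cs /l glue_res.
have Hcr := circuit_prop Hx Hcsk Hcss.
have cl1 : `|cs l|%N = 1%N.
  by move: (Hcu i0) hi0; rewrite hl !inE; case/or3P => /eqP ->.
have hdiv k' : `|x k'|%N = (`|cs k'| * `|x l|)%N.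
  have := congr1 absz (Hcr k' l); rewrite !abszM cl1 muln1 => ->; by [].
have xl1 : `|x l|%N = 1%N.
  apply/eqP; rewrite -dvdn1 -Hxg; apply: dvd_big_gcd => k'.
  by rewrite (hdiv k') dvdn_mull.
have hk : (`|x k| <= 1)%N.
  rewrite hdiv xl1 muln1 /cs.
  by move: (Hcu (glue k i0)); rewrite !inE; case/or3P => /eqP ->.
move: hk; rewrite !inE; case: (x k) => [[|[|m]]|[|m]] //.
Qed.

Theorem corollary3p10 (n : nat) (C : {set {set 'I_n}}) (S : {set 'I_n}) :
  simplicial_complex C -> unimodular_complex C -> S \in C ->
  unimodular_complex (link C S).
Proof. by move=> _ Hu _; exact: main_gen. Qed.
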